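(* Let $1<g\in\mathbb{N}$ and let $\mathbf{X}=\bigcup_{i\ge1}X_i$ be a $g$-discrete self-similar fractal. For every $i\in\mathbb{Z}^+$, if $P_{\mathbf{X}}(i)$ holds then $P_{\mathbf{X}}(i+1)$ holds, where $P_{\mathbf{X}}(s)$ is the property: ''the full grid graph of $X_s$ is a tree and $nhb_{X_s}=nvb_{X_s}=1$''.
   Context: For $g\in\mathbb{N}$ write $\mathbb{N}_g=\{0,\dots,g-1\}$; for $A,B\subseteq\mathbb{N}^2$ and $k\in\mathbb{N}$, $A+kB=\{\vec m+k\vec n : \vec m\in A,\vec n\in B\}$. Let $1<g\in\mathbb{N}$. A set $\mathbf{X}\subset\mathbb{N}^2$ is a $g$-discrete self-similar fractal if there is a set $G$ with $\{(0,0)\}\subsetneq G\subsetneq\mathbb{N}_g^2$ having at least one point in every row and every column of $\mathbb{N}_g^2$ such that $\mathbf{X}=\bigcup_{i\ge1}X_i$, where $X_1=G$ and $X_{i+1}=X_i+g^iG$ ($X_i$ is the $i$-th stage). The full grid graph of $V\subseteq\mathbb{Z}^2$ has vertex set $V$ and an edge between $\vec x,\vec y$ iff $\|\vec x-\vec y\|=1$; a tree means this graph is connected and acyclic. For a finite $S\subseteq\mathbb{Z}^2$ let $l_S=\min_{(x,y)\in S}x$, $r_S=\max_{(x,y)\in S}x$, $b_S=\min_{(x,y)\in S}y$, $t_S=\max_{(x,y)\in S}y$. An h-bridge of $S$ is a subset of $S$ of the form $\{(l_S,y),(r_S,y)\}$; a v-bridge is a subset of $S$ of the form $\{(x,b_S),(x,t_S)\}$;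 $nhb_S$, $nvb_S$ denote their numbers. *)

(* Defs.v *)
(* Points of N^2 are pairs (nat * nat); finite subsets of N^2
   are represented by sequences (membership via \in; duplicates irrelevant). *)
From mathcomp Require Import all_boot.
Set Implicit Arguments. Unset Strict Implicit. Unset Printing Implicit Defensive.

Definition pt := (nat * nat)%type.

Definition padd (m n : pt) : pt := (m.1 + n.1, m.2 + n.2).
Definition pscale (k : nat) (n : pt) : pt := (k * n.1, k * n.2).

Definition valid_gen (g : nat) (G : seq pt) : Prop :=
  all (fun p : pt => (p.1 < g) && (p.2 < g)) G /\
  (0, 0) \in G /\
  (exists p : pt, p \in G /\ p != (0, 0)) /\
  (exists p : pt, [&& p.1 < g, p.2 < g & p \notin G]) /\
  (forall y, y < g -> exists x, (x, y) \in G) /\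
  (forall x, x < g -> exists y, (x, y) \in G).

(* stage_aux g G k = X_{k+1} *)
Fixpoint stage_aux (g : nat) (G : seq pt) (k : nat) : seq pt :=
  match k with
  | 0 => G
  | k'.+1 => [seq padd m (pscale (g ^ k'.+1) n) | m <- stage_aux g G k', n <- G]
  end.

(* stage g G i = X_i  for i >= 1 (X_1 = G, X_{i+1} = X_i + g^i G) *)
Definition stage (g : nat) (G : seq pt) (i : nat) : seq pt := stage_aux g G i.-1.

Definition adj (p q : pt) : bool :=
  ((p.1 == q.1) && ((p.2 == q.2.+1) || (q.2 == p.2.+1))) ||
  ((p.2 == q.2) && ((p.1 == q.1.+1) || (q.1 == p.1.+1))).

Definition grid_connected (S : seq pt) : Prop :=
  forall u v, u \in S -> v \in S ->
    exists p : seq pt, [&& path adj u p, last u p == v & all (mem S) p].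

Definition grid_acyclic (S : seq pt) : Prop :=
  ~ exists c : seq pt, [&& 3 <= size c, uniq c, all (mem S) c & cycle adj c].

Definition grid_tree (S : seq pt) : Prop := grid_connected S /\ grid_acyclic S.

Definition lS (S : seq pt) : nat := \big[minn/(head (0,0) S).1]_(p <- S) p.1.
Definition rS (S : seq pt) : nat := \max_(p <- S) p.1.
Definition bS (S : seq pt) : nat := \big[minn/(head (0,0) S).2]_(p <- S) p.2.
Definition tS (S : seq pt) : nat := \max_(p <- S) p.2.

(* number of h-bridges {(l_S,y),(r_S,y)} ⊆ S, i.e. number of such y *)
Definition nhb (S : seq pt) : nat :=
  size (undup [seq p.2 | p <- S & (p.1 == lS S) && ((rS S, p.2) \in S)]).
(* number of v-bridges {(x,b_S),(x,t_S)} ⊆ S, i.e. number of such x *)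
Definition nvb (S : seq pt) : nat :=
  size (undup [seq p.1 | p <- S & (p.2 == bS S) && ((p.1, tS S) \in S)]).

Definition Pprop (S : seq pt) : Prop := grid_tree S /\ nhb S = 1 /\ nvb S = 1.

(* Main.v *)
Require Import Defs.
From mathcomp Require Import all_boot zify.
Set Implicit Arguments. Unset Strict Implicit. Unset Printing Implicit Defensive.

Lemma dm L x q r : r < L -> x = q * L + r -> x %/ L = q /\ x %% L = r.
Proof.
move=> hr ->; have L0 : 0 < L by lia.
split; first by rewrite divnMDl // divn_small // addn0.
by rewrite modnMDl modn_small.
Qed.

Lemma dmE L x : 0 < L -> x = x %/ L * L + x %% L /\ x %% L < L.
Proof. by move=> L0; split; [apply: divn_eq | apply: ltn_pmod]. Qed.

Lemma stepS L x : 0 < L ->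
  (x.+1 %/ L = x %/ L /\ x.+1 %% L = (x %% L).+1) \/
  (x.+1 %/ L = (x %/ L).+1 /\ x.+1 %% L = 0 /\ x %% L = L.-1).
Proof.
move=> L0; have [e1 e2] := dmE x L0.
case: (ltnP (x %% L).+1 L) => h.
- left; apply: dm => //; lia.
- right; have h2 : x %% L = L.-1 by lia.
  have [-> ->] : x.+1 %/ L = (x %/ L).+1 /\ x.+1 %% L = 0 by apply: dm; lia.
  by [].
Qed.

Definition blk L (p : pt) : pt := (p.1 %/ L, p.2 %/ L).
Definition off L (p : pt) : pt := (p.1 %% L, p.2 %% L).
Definition Zp (W G : pred pt) L : pred pt := fun p => W (off L p) && G (blk L p).

Lemma adjP p q : reflect ((p.1 = q.1 /\ (p.2 = q.2.+1 \/ q.2 = p.2.+1)) \/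
  (p.2 = q.2 /\ (p.1 = q.1.+1 \/ q.1 = p.1.+1))) (adj p q).
Proof.
rewrite /adj; apply: (iffP idP).
- by case/orP=> /andP[/eqP h /orP[]/eqP h']; [left|left|right|right]; tauto.
- by case=> [][/eqP -> [] ->]; rewrite ?eqxx ?orbT.
Qed.

Lemma adj_sym p q : adj p q = adj q p.
Proof. by apply/adjP/adjP; lia. Qed.

Lemma adj_irr p : adj p p = false.
Proof. by apply/adjP; lia. Qed.

Lemma adj_trans a b t : adj (padd a t) (padd b t) = adj a b.
Proof. by rewrite /padd; apply/adjP/adjP => /=; lia. Qed.

Lemma bo_trans L w n : w.1 < L -> w.2 < L ->
  blk L (padd w (pscale L n)) = n /\ off L (padd w (pscale L n)) = w.
Proof.
move=> h1 h2; rewrite /blk /off /padd /pscale /=.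
have [e1 f1] : (w.1 + L * n.1) %/ L = n.1 /\ (w.1 + L * n.1) %% L = w.1 by apply: dm; lia.
have [e2 f2] : (w.2 + L * n.2) %/ L = n.2 /\ (w.2 + L * n.2) %% L = w.2 by apply: dm; lia.
by rewrite e1 f1 e2 f2 -!surjective_pairing.
Qed.

Lemma trans_bo L p : 0 < L -> padd (off L p) (pscale L (blk L p)) = p.
Proof.
move=> L0; rewrite /blk /off /padd /pscale /=.
have [e1 _] := dmE p.1 L0; have [e2 _] := dmE p.2 L0.
case: p e1 e2 => a b /= e1 e2; congr pair; lia.
Qed.

Lemma off_lt L p : 0 < L -> (off L p).1 < L /\ (off L p).2 < L.
Proof. by move=> L0; rewrite /off /= !ltn_pmod. Qed.

Lemma adj_blk L p q : 0 < L -> adj p q -> adj (blk L p) (blk L q) || (blk L p == blk L q).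
Proof.
move=> L0 /adjP h; rewrite /blk.
have s1 := stepS p.1 L0; have s2 := stepS p.2 L0;
have s3 := stepS q.1 L0; have s4 := stepS q.2 L0.
case: p q h s1 s2 s3 s4 => a b [c d] /= h s1 s2 s3 s4.
case: h => [][e []] e'; rewrite e e' ?eqxx /=.
- by case: s4 => [][-> _]; rewrite /adj /= ?eqxx ?orbT.
- by case: s2 => [][-> _]; rewrite /adj /= ?eqxx ?orbT.
- by case: s3 => [][-> _]; rewrite /adj /= ?eqxx ?orbT.
- by case: s1 => [][-> _]; rewrite /adj /= ?eqxx ?orbT.
Qed.

Lemma adj_same L p q : 0 < L -> adj p q -> blk L p = blk L q -> adj (off L p) (off L q).
Proof.
move=> L0 /adjP h; rewrite /blk /off => E.
have s1 := stepS p.1 L0; have s2 := stepS p.2 L0;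
have s3 := stepS q.1 L0; have s4 := stepS q.2 L0.
case: p q h E s1 s2 s3 s4 => a b [c d] /= h [E1 E2] s1 s2 s3 s4.
case: h => [][e []] e'; rewrite e e' in E1 E2 *.
- case: s4 => [][h1 h2]; last by move: E2; rewrite h1; lia.
  by rewrite h2; apply/adjP => /=; lia.
- case: s2 => [][h1 h2]; last by move: E2; rewrite h1; lia.
  by rewrite h2; apply/adjP => /=; lia.
- case: s3 => [][h1 h2]; last by move: E1; rewrite h1; lia.
  by rewrite h2; apply/adjP => /=; lia.
- case: s1 => [][h1 h2]; last by move: E1; rewrite h1; lia.
  by rewrite h2; apply/adjP => /=; lia.
Qed.

Lemma path_map_in (f : pt -> pt) (P : pred pt) (e e' : rel pt) x s :
  P x -> all P s -> (forall a b, P a -> P b -> e a b -> e' (f a) (f b)) ->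
  path e x s -> path e' (f x) (map f s).
Proof.
move=> Px Ps H; elim: s x Px Ps => //= y s IH x Px /andP[Py Ps] /andP[exy ps].
by rewrite H // IH.
Qed.

Lemma uniq_path_rel (e e' : rel pt) x p :
  (forall a b, a != b -> e a b -> e' a b) -> path e x p -> uniq (x :: p) -> path e' x p.
Proof.
move=> H; elim: p x => //= y p IH x /andP[exy py] /andP[]; rewrite in_cons negb_or.
case/andP=> nxy _ up; rewrite H // IH //.
Qed.

Definition adjE (a b : pt) := adj a b || (a == b).

Lemma unstutter (A : pred pt) x s : path adjE x s -> all A s ->
  exists p, [&& path adj x p, last x p == last x s & all A p].
Proof.
move=> ps As; case: (shortenP ps) => p' pp' up' sub.
exists p'; rewrite eqxx /=; apply/andP; split.
- apply: uniq_path_rel pp' up' => a b nab /orP[] // /eqP e; by rewrite e eqxx in nab.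
- by apply/allP=> z /sub zs; move/allP: As; apply.
Qed.

Definition conn (A : pred pt) := forall u v, A u -> A v ->
  exists p, [&& path adj u p, last u p == v & all A p].
Definition acyc (A : pred pt) :=
  ~ exists c, [&& 3 <= size c, uniq c, all A c & cycle adj c].

Lemma conn_tr (S : seq pt) (A : pred pt) : (forall p, (p \in S) = A p) ->
  grid_connected S <-> conn A.
Proof.
move=> E; have E' : forall p, all (mem S) p = all A p by move=> p; apply: eq_all => z; exact: E.
split=> H u v hu hv.
- by rewrite -!E in hu hv; have [p hp] := H u v hu hv; exists p; rewrite -E'.
- by rewrite !E in hu hv; have [p hp] := H u v hu hv; exists p; rewrite E'.
Qed.

Lemma acyc_tr (S : seq pt) (A : pred pt) : (forall p, (p \in S) = A p) ->
  grid_acyclic S <-> acyc A.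
Proof.
move=> E; have E' : forall p, all (mem S) p = all A p by move=> p; apply: eq_all => z; exact: E.
by split=> H [c hc]; apply: H; exists c; rewrite ?E' // -E'.
Qed.

Lemma acyc_sub (A B : pred pt) : (forall p, A p -> B p) -> acyc B -> acyc A.
Proof.
move=> sAB H [c /and4P[h1 h2 h3 h4]]; apply: H; exists c; rewrite h1 h2 h4 /= andbT.
by apply/allP=> z zc; apply: sAB; move/allP: h3; apply.
Qed.

Definition Rab (a b : pt) : rel pt := fun x y =>
  adjE x y && ~~ (((x == a) && (y == b)) || ((x == b) && (y == a))).

Lemma tree_walk (A : pred pt) a b t : acyc A -> A a -> A b -> adj a b ->
  path (Rab a b) b t -> last b t = a -> all A t -> False.
Proof.
move=> ac Aa Ab ab pt0 lt At.
move: lt; case: (shortenP pt0) => p' pp' up' sub la.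
have nab : a != b by apply/negP => /eqP e; rewrite e adj_irr in ab.
apply: ac; exists (b :: p'); apply/and4P; split.
- case: p' pp' up' sub la => [|y [|z p]].
  + by move=> _ _ _ /= e; rewrite e eqxx in nab.
  + move=> /= /andP[h _] _ _ e; subst y; move: h.
    by rewrite /Rab !eqxx orbT andbF.
  + by [].
- exact: up'.
- rewrite /= Ab /=; apply/allP=> z /sub zs; by move/allP: At; apply.
- rewrite /cycle /= rcons_path; apply/andP; split.
  + apply: uniq_path_rel pp' up' => x y nxy /andP[] /orP[] // /eqP e; by rewrite e eqxx in nxy.
  + by rewrite la.
Qed.

Definition Box (W : pred pt) L := forall p, W p -> p.1 < L /\ p.2 < L.

Lemma Z_trans (W G : pred pt) L w n : Box W L -> W w -> G n ->
  Zp W G L (padd w (pscale L n)).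
Proof.
move=> bx Ww Gn; have [h1 h2] := bx _ Ww; have [e f] := bo_trans n h1 h2.
by rewrite /Zp e f Ww Gn.
Qed.

Lemma Z_off (W G : pred pt) L p : Zp W G L p -> W (off L p).
Proof. by case/andP. Qed.
Lemma Z_blk (W G : pred pt) L p : Zp W G L p -> G (blk L p).
Proof. by case/andP. Qed.

Lemma conn_down (W G : pred pt) L : 0 < L -> Box W L -> W (0,0) ->
  conn (Zp W G L) -> conn G.
Proof.
move=> L0 bx W0 cZ u v Gu Gv.
have Zu := Z_trans bx W0 Gu; have Zv := Z_trans bx W0 Gv.
have [bu _] := bo_trans (L := L) u (L0 : (0,0).1 < L) L0.
have [bv _] := bo_trans (L := L) v (L0 : (0,0).1 < L) L0.
have [p /and3P[pp lp ap]] := cZ _ _ Zu Zv.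
have pm : path adjE (blk L (padd (0,0) (pscale L u))) (map (blk L) p).
  apply: (path_map_in (P := Zp W G L)) pp => // a b _ _; exact: adj_blk.
have am : all G (map (blk L) p).
  by rewrite all_map; apply/allP=> z zp; apply: Z_blk; move/allP: ap; apply.
have [q /and3P[pq lq aq]] := unstutter pm am.
exists q; rewrite -{1 2}bu pq aq (eqP lq).
by rewrite last_map (eqP lp) bv eqxx.
Qed.

Lemma trans_path (W G : pred pt) L n w1 p : Box W L -> G n -> W w1 -> all W p ->
  path adj w1 p ->
  [&& path adj (padd w1 (pscale L n)) (map (fun w => padd w (pscale L n)) p),
      last (padd w1 (pscale L n)) (map (fun w => padd w (pscale L n)) p) ==
        padd (last w1 p) (pscale L n) &
      all (Zp W G L) (map (fun w => padd w (pscale L n)) p)].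
Proof.
move=> bx Gn W1 Wp pp; apply/and3P; split.
- apply: (path_map_in (P := W)) pp => // a b _ _; by rewrite adj_trans.
- by rewrite (last_map (fun w => padd w (pscale L n))).
- rewrite all_map; apply/allP => z zp; apply: Z_trans => //; by move/allP: Wp; apply.
Qed.

Lemma cross_ex (W G : pred pt) L x0 y0 n m : 0 < L -> Box W L ->
  W (0, y0) -> W (L.-1, y0) -> W (x0, 0) -> W (x0, L.-1) ->
  G n -> G m -> adj n m ->
  exists a b, [/\ Zp W G L a, Zp W G L b, adj a b, blk L a = n & blk L b = m].
Proof.
move=> L0 bx h1 h2 v1 v2 Gn Gm /adjP nm.
have bo w k : W w -> blk L (padd w (pscale L k)) = k.
  by move=> Ww; have [a b] := bx _ Ww; have [-> _] := bo_trans k a b.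
case: nm => [][e []] e'.
- exists (padd (x0, 0) (pscale L n)), (padd (x0, L.-1) (pscale L m)).
  split; [exact: Z_trans | exact: Z_trans | | exact: bo | exact: bo].
  apply/adjP; rewrite /padd /pscale /=; left; split; first by rewrite e.
  left; rewrite e'; lia.
- exists (padd (x0, L.-1) (pscale L n)), (padd (x0, 0) (pscale L m)).
  split; [exact: Z_trans | exact: Z_trans | | exact: bo | exact: bo].
  apply/adjP; rewrite /padd /pscale /=; left; split; first by rewrite e.
  right; rewrite e'; lia.
- exists (padd (0, y0) (pscale L n)), (padd (L.-1, y0) (pscale L m)).
  split; [exact: Z_trans | exact: Z_trans | | exact: bo | exact: bo].
  apply/adjP; rewrite /padd /pscale /=; right; split; first by rewrite e.
  left; rewrite e'; lia.
- exists (padd (L.-1, y0) (pscale L n)), (padd (0, y0) (pscale L m)).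
  split; [exact: Z_trans | exact: Z_trans | | exact: bo | exact: bo].
  apply/adjP; rewrite /padd /pscale /=; right; split; first by rewrite e.
  right; rewrite e'; lia.
Qed.

Lemma conn_up_aux (W G : pred pt) L x0 y0 : 0 < L -> Box W L ->
  W (0, y0) -> W (L.-1, y0) -> W (x0, 0) -> W (x0, L.-1) -> conn W ->
  forall s n, G n -> path adj n s -> all G s ->
  forall u v, Zp W G L u -> Zp W G L v -> blk L u = n -> blk L v = last n s ->
  exists p, [&& path adj u p, last u p == v & all (Zp W G L) p].
Proof.
move=> L0 bx h1 h2 v1 v2 cW.
have seg u v n : Zp W G L u -> Zp W G L v -> blk L u = n -> blk L v = n ->
    exists p, [&& path adj u p, last u p == v & all (Zp W G L) p].
  move=> Zu Zv bu bv; subst n.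
  have [q /and3P[pq lq aq]] := cW _ _ (Z_off Zu) (Z_off Zv).
  have Gn : G (blk L u) := Z_blk Zu.
  have /and3P[H1 H2 H3] := trans_path bx Gn (Z_off Zu) aq pq.
  rewrite trans_bo // in H1 H2.
  exists [seq padd w (pscale L (blk L u)) | w <- q].
  by rewrite H1 H3 (eqP H2) (eqP lq) -bv trans_bo // eqxx.
elim=> [|m s IH] n Gn /=.
  by move=> _ _ u v Zu Zv bu bv; exact: seg Zu Zv bu bv.
case/andP=> nm ps /andP[Gm Gs] u v Zu Zv bu bv.
have [a [b [Za Zb ab ba bb]]] := cross_ex L0 bx h1 h2 v1 v2 Gn Gm nm.
have [p1 /and3P[pp1 lp1 ap1]] := seg u a n Zu Za bu ba.
have [p2 /and3P[pp2 lp2 ap2]] := IH m Gm ps Gs b v Zb Zv bb bv.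
exists (p1 ++ b :: p2); rewrite cat_path last_cat /= (eqP lp1) pp1 ab pp2 lp2 /=.
by rewrite all_cat ap1 /= Zb ap2.
Qed.

Lemma conn_up (W G : pred pt) L x0 y0 : 0 < L -> Box W L ->
  W (0, y0) -> W (L.-1, y0) -> W (x0, 0) -> W (x0, L.-1) -> conn W -> conn G ->
  conn (Zp W G L).
Proof.
move=> L0 bx h1 h2 v1 v2 cW cG u v Zu Zv.
have [s /and3P[ps ls as_]] := cG _ _ (Z_blk Zu) (Z_blk Zv).
apply: (conn_up_aux L0 bx h1 h2 v1 v2 cW (Z_blk Zu) ps as_ Zu Zv) => //.
by rewrite (eqP ls).
Qed.

Definition crs L x0 y0 (n m : pt) : pt :=
  if m == (n.1.+1, n.2) then padd (L.-1, y0) (pscale L n)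
  else if n == (m.1.+1, m.2) then padd (0, y0) (pscale L n)
  else if m == (n.1, n.2.+1) then padd (x0, L.-1) (pscale L n)
  else padd (x0, 0) (pscale L n).

Ltac fin_crs := rewrite /crs /padd /pscale !xpair_eqE /=;
  repeat (case: ifP => ?); (try (exfalso; lia)); apply: injective_projections => /=; lia.

Lemma crs_char (W G : pred pt) L x0 y0 a b : 0 < L ->
  (forall y, W (0, y) -> W (L.-1, y) -> y = y0) ->
  (forall x, W (x, 0) -> W (x, L.-1) -> x = x0) ->
  Zp W G L a -> Zp W G L b -> adj a b -> blk L a != blk L b ->
  a = crs L x0 y0 (blk L a) (blk L b).
Proof.
move=> L0 hu hv /andP[Wa _] /andP[Wb _] /adjP ab nb.
case: a b Wa Wb ab nb => [a1 a2] [b1 b2]; rewrite /off /blk /= => Wa Wb ab nb.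
have [ea1 _] := dmE a1 L0; have [ea2 _] := dmE a2 L0.
have [eb1 _] := dmE b1 L0; have [eb2 _] := dmE b2 L0.
case: ab => [][e []] e'; rewrite e e' in Wa Wb nb ea1 ea2 eb1 eb2 *.
- case: (stepS b2 L0) => [][d1 d2]; first by rewrite d1 eqxx in nb.
  case: d2 => m1 m2; rewrite m1 in Wa; rewrite m2 in Wb.
  have hx := hv _ Wa Wb; fin_crs.
- case: (stepS a2 L0) => [][d1 d2]; first by rewrite d1 eqxx in nb.
  case: d2 => m1 m2; rewrite m1 in Wb; rewrite m2 in Wa.
  have hx := hv _ Wb Wa; fin_crs.
- case: (stepS b1 L0) => [][d1 d2]; first by rewrite d1 eqxx in nb.
  case: d2 => m1 m2; rewrite m1 in Wa; rewrite m2 in Wb.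
  have hx := hu _ Wa Wb; fin_crs.
- case: (stepS a1 L0) => [][d1 d2]; first by rewrite d1 eqxx in nb.
  case: d2 => m1 m2; rewrite m1 in Wb; rewrite m2 in Wa.
  have hx := hu _ Wb Wa; fin_crs.
Qed.

Lemma avoid (Q : pred pt) w : forall s z, all (predC Q) s -> (s != [::]) || ~~ Q z ->
  path adj z (rcons s w) -> path (fun a b => adj a b && (~~ Q a || ~~ Q b)) z (rcons s w).
Proof.
elim=> [|y s IH] z /=.
- by move=> _ hz /andP[hzw _]; rewrite hzw hz.
- case/andP=> Qy Qs _ /andP[zy ps]; rewrite zy Qy orbT /=.
  by apply: IH => //; rewrite Qy orbT.
Qed.

Lemma path_same (f : pt -> pt) x s : path (fun a b => f a == f b) x s ->
  all (fun z => f z == f x) s.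
Proof.
elim: s x => //= y s IH x /andP[/eqP fxy ps]; rewrite fxy eqxx /=; exact: IH.
Qed.

Lemma acyc_up (W G : pred pt) L x0 y0 : 0 < L ->
  (forall y, W (0, y) -> W (L.-1, y) -> y = y0) ->
  (forall x, W (x, 0) -> W (x, L.-1) -> x = x0) ->
  acyc W -> acyc G -> acyc (Zp W G L).
Proof.
move=> L0 hu hv aW aG [c /and4P[sc uc ac cc]].
have cch a b : Zp W G L a -> Zp W G L b -> adj a b -> blk L a != blk L b ->
    a = crs L x0 y0 (blk L a) (blk L b) by move=> *; apply: (crs_char (W:=W) (G:=G)).
case: (boolP (all (fun z => blk L (next c z) == blk L z) c)) => H.
- have cyc : cycle (fun a b => blk L a == blk L b) c.
    apply: (@cycle_from_next _ (fun a b => blk L a == blk L b) c uc) => z zc /=.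
    rewrite eq_sym; by move/allP: H; apply.
  case: c sc uc ac cc cyc {H} => [|h s] // sc uc ac cc cyc.
  have Ps : all (fun z => blk L z == blk L h) (h :: s).
    rewrite /= eqxx /=; move: cyc; rewrite /cycle => /path_same.
    by rewrite all_rcons => /andP[].
  apply: aW; exists (map (off L) (h :: s)); apply/and4P; split.
  + by rewrite size_map.
  + rewrite map_inj_in_uniq // => z1 z2 z1c z2c e.
    rewrite -(trans_bo z1 L0) -(trans_bo z2 L0) e.
    by move/allP: Ps => Ps; rewrite (eqP (Ps _ z1c)) (eqP (Ps _ z2c)).
  + by rewrite all_map; apply/allP => z zc; apply: (@Z_off W G L); move/allP: ac; apply.
  + rewrite /cycle /= -map_rcons; move: cc; rewrite /cycle /= => cc.
    apply: (path_map_in (P := fun z => blk L z == blk L h)) cc => //.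
    * by rewrite all_rcons eqxx; move: Ps => /= /andP[].
    * by move=> a b /eqP pa /eqP pb ab; apply: adj_same => //; rewrite pa pb.
- case/allPn: H => x xc hx.
  case: (rot_to xc) => i s' er.
  have uc' : uniq (x :: s') by rewrite -er rot_uniq.
  have cc' : cycle adj (x :: s') by rewrite -er rot_cycle.
  have ac' : all (Zp W G L) (x :: s').
    by apply/allP => z; rewrite -er mem_rot; move/allP: ac; apply.
  have sc' : 3 <= size (x :: s') by rewrite -er size_rot.
  have nx : next (x :: s') x = next c x by rewrite -er next_rot.
  clear er; case: s' uc' cc' ac' sc' nx => [|y rest] // uc' cc' ac' sc' nx.
  rewrite /= eqxx in nx; rewrite -nx in hx.
  move: cc'; rewrite /cycle /= => /andP[xy pr].
  have rne : rest != [::] by case: rest sc' {uc' ac' pr}.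
  move: uc' => /= /andP[]; rewrite in_cons negb_or => /andP[nxy nxr] /andP[nyr _].
  move: ac' => /= /and3P[Zx Zy Zr].
  pose Q : pred pt := fun z => z \in [:: x; y].
  have Qr : all (predC Q) rest.
    apply/allP => z zr /=; rewrite /Q !inE negb_or; apply/andP; split.
    + by apply/eqP => e; rewrite -e zr in nxr.
    + by apply/eqP => e; rewrite -e zr in nyr.
  have pR := avoid Qr (_ : (rest != [::]) || ~~ Q y) pr.
  rewrite rne in pR; have {}pR := pR isT.
  have nb : blk L x != blk L y by rewrite eq_sym.
  have cx := cch _ _ Zx Zy xy nb.
  have yx : adj y x by rewrite adj_sym.
  have cy := cch _ _ Zy Zx yx hx.
  have pB : path (Rab (blk L x) (blk L y)) (blk L y) (map (blk L) (rcons rest x)).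
    apply: (path_map_in (P := Zp W G L)) pR => //.
    * by rewrite all_rcons Zx Zr.
    * move=> a b Za Zb /andP[ab nQ]; rewrite /Rab /adjE adj_blk //=.
      apply/negP => /orP[] /andP[/eqP ea /eqP eb].
      - have nab : blk L a != blk L b by rewrite ea eb.
        have ca := cch _ _ Za Zb ab nab.
        have ba : adj b a by rewrite adj_sym.
        have nba : blk L b != blk L a by rewrite eq_sym.
        have cb := cch _ _ Zb Za ba nba.
        rewrite ea eb -cx in ca; rewrite ea eb -cy in cb.
        by move: nQ; rewrite ca cb /Q /= !in_cons !eqxx /= ?orbT.
      - have nab : blk L a != blk L b by rewrite ea eb eq_sym.
        have ca := cch _ _ Za Zb ab nab.
        have ba : adj b a by rewrite adj_sym.
        have nba : blk L b != blk L a by rewrite eq_sym.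
        have cb := cch _ _ Zb Za ba nba.
        rewrite ea eb -cy in ca; rewrite ea eb -cx in cb.
        by move: nQ; rewrite ca cb /Q /= !in_cons !eqxx /= ?orbT.
  apply: (tree_walk aG (Z_blk Zx) (Z_blk Zy) _ pB).
  + by move: (adj_blk L0 xy); rewrite (negbTE nb) orbF.
  + by rewrite last_map last_rcons.
  + by rewrite all_map all_rcons /= (Z_blk Zx) /=; apply/allP => z zr; apply: Z_blk; move/allP: Zr; apply.
Qed.

Lemma bigmin0 (F : pt -> nat) h (S : seq pt) : (exists2 p, p \in S & F p = 0) ->
  \big[minn/h]_(p <- S) F p = 0.
Proof.
elim: S => [[p]|a S IH [p]] //; rewrite big_cons in_cons => /orP[/eqP -> ->|pS fp].
- by rewrite min0n.
- by rewrite IH ?minn0 //; exists p.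
Qed.

Lemma bigmaxE (F : pt -> nat) (S : seq pt) M : (exists2 p, p \in S & F p = M) ->
  (forall p, p \in S -> F p <= M) -> \max_(p <- S) F p = M.
Proof.
move=> [p pS fp] H; apply/eqP; rewrite eqn_leq; apply/andP; split.
- by apply/bigmax_leqP_seq => q qS _; apply: H.
- by rewrite -fp; apply: (leq_bigmax_seq (P := predT)).
Qed.

Lemma undup1 (s : seq nat) : size (undup s) = 1 <-> exists y, forall z, (z \in s) = (z == y).
Proof.
split.
- case E: (undup s) => [|y [|z t]] // _; exists y => z.
  by rewrite -mem_undup E mem_seq1.
- case=> y H; have P : perm_eq (undup s) [:: y].
    by apply: uniq_perm => //; [exact: undup_uniq | move=> z; rewrite mem_undup H mem_seq1].
  by rewrite (perm_size P).
Qed.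

Lemma nhb1 S : nhb S = 1 <-> exists y, forall y',
  (((lS S, y') \in S) && ((rS S, y') \in S)) = (y' == y).
Proof.
rewrite /nhb undup1.
have M z : (z \in [seq p.2 | p <- S & (p.1 == lS S) && ((rS S, p.2) \in S)]) =
    ((lS S, z) \in S) && ((rS S, z) \in S).
  apply/mapP/andP.
  - case=> p; rewrite mem_filter => /andP[/andP[/eqP e r] pS] ->; split => //.
    by rewrite -e -surjective_pairing.
  - case=> h1 h2; exists (lS S, z) => //; by rewrite mem_filter /= eqxx h2 h1.
by split; case=> y H; exists y => z; rewrite -H M.
Qed.

Lemma nvb1 S : nvb S = 1 <-> exists x, forall x',
  (((x', bS S) \in S) && ((x', tS S) \in S)) = (x' == x).
Proof.
rewrite /nvb undup1.
have M z : (z \in [seq p.1 | p <- S & (p.2 == bS S) && ((p.1, tS S) \in S)]) =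
    ((z, bS S) \in S) && ((z, tS S) \in S).
  apply/mapP/andP.
  - case=> p; rewrite mem_filter => /andP[/andP[/eqP e r] pS] ->; split => //.
    by rewrite -e -surjective_pairing.
  - case=> h1 h2; exists (z, bS S) => //; by rewrite mem_filter /= eqxx h2 h1.
by split; case=> y H; exists y => z; rewrite -H M.
Qed.

Fixpoint X (g : nat) (G : pred pt) (k : nat) : pred pt :=
  match k with
  | 0 => fun p => p == (0, 0)
  | k'.+1 => Zp (X g G k') G (g ^ k')
  end.

Definition GBox (G : pred pt) g := forall p, G p -> p.1 < g /\ p.2 < g.

Lemma Xbox g (G : pred pt) k : 0 < g -> GBox G g -> Box (X g G k) (g ^ k).
Proof.
move=> g0 gb; case: k => [|k] p /=; first by move/eqP ->.
case/andP=> _ /gb[]; rewrite /blk /= !ltn_divLR ?expn_gt0 ?g0 // expnS mulnC; lia.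
Qed.

Lemma X00 g (G : pred pt) k : G (0,0) -> X g G k (0, 0).
Proof.
move=> G0; elim: k => [|k IH] //=; rewrite /Zp /off /blk /= mod0n div0n IH //.
Qed.

Lemma Xmono g (G : pred pt) k p : 0 < g -> GBox G g -> G (0,0) -> G p -> X g G k.+1 p.
Proof.
move=> g0 gb G0 Gp; elim: k => [|k IH].
- by rewrite /= /Zp /off /blk /= expn0 !modn1 !divn1 -surjective_pairing Gp.
- have [h1 h2] := Xbox g0 gb IH.
  have [e f] := bo_trans (0,0) h1 h2.
  by move: e f; rewrite /padd /pscale /= !muln0 !addn0 -!surjective_pairing /=
    => e f; change (Zp (X g G k.+1) G (g ^ k.+1) p); rewrite /Zp f e IH G0.
Qed.

Lemma stage_mem g (G : seq pt) k p : 0 < g -> GBox (fun q => q \in G) g ->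
  (p \in stage_aux g G k) = X g (fun q => q \in G) k.+1 p.
Proof.
move=> g0 gb; elim: k p => [|k IH] p.
- by rewrite /= /Zp /off /blk /= expn0 !modn1 !divn1 -surjective_pairing.
- change ((p \in [seq padd m (pscale (g ^ k.+1) n) | m <- stage_aux g G k, n <- G]) =
    Zp (X g (fun q => q \in G) k.+1) (fun q => q \in G) (g ^ k.+1) p).
  apply/allpairsP/idP.
  + case=> [[m n]] /= [mS nG ->]; rewrite IH in mS; apply: Z_trans => //.
    exact: (Xbox (k := k.+1) g0 gb).
  + move=> Zp_; exists (off (g ^ k.+1) p, blk (g ^ k.+1) p) => /=; split.
    * by rewrite IH; case/andP: Zp_.
    * by case/andP: Zp_.
    * by rewrite trans_bo // expn_gt0 g0.
Qed.

Lemma Xcol g (G : pred pt) k : 0 < g -> GBox G g -> (exists y, G (g.-1, y)) ->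
  exists y, X g G k ((g ^ k).-1, y).
Proof.
move=> g0 gb [yy Gy]; elim: k => [|k [y IH]]; first by exists 0.
have [h1 h2] := Xbox g0 gb IH.
exists (y + g ^ k * yy).
have -> : ((g ^ k.+1).-1, y + g ^ k * yy) = padd ((g ^ k).-1, y) (pscale (g ^ k) (g.-1, yy)).
  rewrite /padd /pscale /= expnS; congr pair; have := expn_gt0 g k; rewrite g0 /=; nia.
exact: (Z_trans (@Xbox g G k g0 gb) IH Gy).
Qed.

Lemma Xrow g (G : pred pt) k : 0 < g -> GBox G g -> (exists x, G (x, g.-1)) ->
  exists x, X g G k (x, (g ^ k).-1).
Proof.
move=> g0 gb [xx Gx]; elim: k => [|k [x IH]]; first by exists 0.
have [h1 h2] := Xbox g0 gb IH.
exists (x + g ^ k * xx).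
have -> : (x + g ^ k * xx, (g ^ k.+1).-1) = padd (x, (g ^ k).-1) (pscale (g ^ k) (xx, g.-1)).
  rewrite /padd /pscale /= expnS; congr pair; have := expn_gt0 g k; rewrite g0 /=; nia.
exact: (Z_trans (@Xbox g G k g0 gb) IH Gx).
Qed.

Lemma hbrZ (W G : pred pt) L g y : 0 < L -> 0 < g ->
  (Zp W G L (0, y) && Zp W G L ((g * L).-1, y)) =
  (W (0, y %% L) && W (L.-1, y %% L)) && (G (0, y %/ L) && G (g.-1, y %/ L)).
Proof.
move=> L0 g0; have [d m] : (g * L).-1 %/ L = g.-1 /\ (g * L).-1 %% L = L.-1 by apply: dm; nia.
rewrite /Zp /off /blk /= mod0n div0n d m.
by case: (W (0, _)); case: (W (L.-1, _)); case: (G (0, _)); case: (G (g.-1, _)).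
Qed.

Lemma vbrZ (W G : pred pt) L g x : 0 < L -> 0 < g ->
  (Zp W G L (x, 0) && Zp W G L (x, (g * L).-1)) =
  (W (x %% L, 0) && W (x %% L, L.-1)) && (G (x %/ L, 0) && G (x %/ L, g.-1)).
Proof.
move=> L0 g0; have [d m] : (g * L).-1 %/ L = g.-1 /\ (g * L).-1 %% L = L.-1 by apply: dm; nia.
rewrite /Zp /off /blk /= mod0n div0n d m.
by case: (W (_, 0)); case: (W (_, L.-1)); case: (G (_, 0)); case: (G (_, g.-1)).
Qed.

Lemma hbr_G (W G : pred pt) L g yY : 0 < L -> 0 < g -> Box W L ->
  (forall y, (Zp W G L (0, y) && Zp W G L ((g * L).-1, y)) = (y == yY)) ->
  forall a, (G (0, a) && G (g.-1, a)) = (a == yY %/ L).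
Proof.
move=> L0 g0 bx H a; have := H yY; rewrite eqxx hbrZ // => /andP[/andP[w1 w2] _].
apply/idP/eqP.
- move=> ga; have [d m] : (a * L + yY %% L) %/ L = a /\ (a * L + yY %% L) %% L = yY %% L.
    by apply: dm => //; rewrite ltn_pmod.
  have := H (a * L + yY %% L); rewrite hbrZ // d m w1 w2 ga => /esym/eqP <-.
  by rewrite d.
- move=> ->; have := H yY; rewrite eqxx hbrZ //; by case/andP.
Qed.

Lemma vbr_G (W G : pred pt) L g xY : 0 < L -> 0 < g -> Box W L ->
  (forall x, (Zp W G L (x, 0) && Zp W G L (x, (g * L).-1)) = (x == xY)) ->
  forall a, (G (a, 0) && G (a, g.-1)) = (a == xY %/ L).
Proof.
move=> L0 g0 bx H a; have := H xY; rewrite eqxx vbrZ // => /andP[/andP[w1 w2] _].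
apply/idP/eqP.
- move=> ga; have [d m] : (a * L + xY %% L) %/ L = a /\ (a * L + xY %% L) %% L = xY %% L.
    by apply: dm => //; rewrite ltn_pmod.
  have := H (a * L + xY %% L); rewrite vbrZ // d m w1 w2 ga => /esym/eqP <-.
  by rewrite d.
- move=> ->; have := H xY; rewrite eqxx vbrZ //; by case/andP.
Qed.

Lemma hbr_up (W G : pred pt) L g yW yG : 0 < L -> 0 < g -> Box W L ->
  (forall y, (W (0, y) && W (L.-1, y)) = (y == yW)) ->
  (forall a, (G (0, a) && G (g.-1, a)) = (a == yG)) ->
  forall y, (Zp W G L (0, y) && Zp W G L ((g * L).-1, y)) = (y == yG * L + yW).
Proof.
move=> L0 g0 bx HW HG y; rewrite hbrZ // HW HG.
have := HW yW; rewrite eqxx => /andP[w1 _]; have [_ yl] := bx _ w1.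
have [d m] := dm (x := yG * L + yW) yl erefl.
have [e1 _] := dmE y L0.
apply/andP/eqP.
- by case=> /eqP h1 /eqP h2; rewrite e1 h1 h2.
- by move=> ->; rewrite d m.
Qed.

Lemma vbr_up (W G : pred pt) L g xW xG : 0 < L -> 0 < g -> Box W L ->
  (forall x, (W (x, 0) && W (x, L.-1)) = (x == xW)) ->
  (forall a, (G (a, 0) && G (a, g.-1)) = (a == xG)) ->
  forall x, (Zp W G L (x, 0) && Zp W G L (x, (g * L).-1)) = (x == xG * L + xW).
Proof.
move=> L0 g0 bx HW HG x; rewrite vbrZ // HW HG.
have := HW xW; rewrite eqxx => /andP[w1 _]; have [yl _] := bx _ w1.
have [d m] := dm (x := xG * L + xW) yl erefl.
have [e1 _] := dmE x L0.
apply/andP/eqP.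
- by case=> /eqP h1 /eqP h2; rewrite e1 h1 h2.
- by move=> ->; rewrite d m.
Qed.

Lemma ext_stage g (G : seq pt) k : 0 < g -> GBox (fun q => q \in G) g -> (0, 0) \in G ->
  (exists y, (g.-1, y) \in G) -> (exists x, (x, g.-1) \in G) ->
  [/\ lS (stage g G k.+1) = 0, rS (stage g G k.+1) = (g ^ k.+1).-1,
      bS (stage g G k.+1) = 0 & tS (stage g G k.+1) = (g ^ k.+1).-1].
Proof.
move=> g0 gb G0 cx rx.
have M p : (p \in stage g G k.+1) = X g (fun q => q \in G) k.+1 p := stage_mem k p g0 gb.
have Z0 : (0, 0) \in stage g G k.+1 by rewrite M X00.
have B p : p \in stage g G k.+1 -> p.1 <= (g ^ k.+1).-1 /\ p.2 <= (g ^ k.+1).-1.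
  by rewrite M => /(Xbox g0 gb) [h1 h2]; split; rewrite -ltnS (ltn_predK h1).
split.
- by apply: bigmin0; exists (0, 0).
- apply: bigmaxE; last by move=> p /B [].
  have [y Hy] := Xcol k.+1 g0 gb cx; by exists ((g ^ k.+1).-1, y); rewrite ?M.
- by apply: bigmin0; exists (0, 0).
- apply: bigmaxE; last by move=> p /B [].
  have [x Hx] := Xrow k.+1 g0 gb rx; by exists (x, (g ^ k.+1).-1); rewrite ?M.
Qed.

Unset Implicit Arguments.

Theorem mainTheorem7 (g : nat) (G : seq pt) (hg : 1 < g) (hG : valid_gen g G)
  (i : nat) (hi : 0 < i) :
  Pprop (stage g G i) -> Pprop (stage g G i.+1).
Proof.
case: i hi => // j _.
case: hG => [Gb [G0 [_ [_ [Grow Gcol]]]]].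
pose Gp : pred pt := fun q => q \in G.
have g0 : 0 < g by lia.
have gb : GBox Gp g.
  by move=> p pG; move/allP: Gb => /(_ p pG) /andP[].
have Gp0 : Gp (0, 0) := G0.
have cx : exists y, (g.-1, y) \in G by apply: Gcol; lia.
have rx : exists x, (x, g.-1) \in G by apply: Grow; lia.
have MY p : (p \in stage g G j.+1) = X g Gp j.+1 p := stage_mem j p g0 gb.
have MZ p : (p \in stage g G j.+2) = X g Gp j.+2 p := stage_mem j.+1 p g0 gb.
have [lY rY bY tY] := ext_stage j g0 gb G0 cx rx.
have [lZ rZ bZ tZ] := ext_stage j.+1 g0 gb G0 cx rx.
have L'0 : 0 < g ^ j by rewrite expn_gt0 g0.
have L0 : 0 < g ^ j.+1 by rewrite expn_gt0 g0.
have bxW := @Xbox g Gp j g0 gb.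
have bxY := @Xbox g Gp j.+1 g0 gb.
case=> [[cY aY] [hY vY]].
move/(conn_tr MY) in cY; move/(acyc_tr MY) in aY.
move/nhb1: hY => [yY HY]; move/nvb1: vY => [xY VY].
rewrite lY rY in HY; rewrite bY tY in VY.
have HY' y : (X g Gp j.+1 (0, y) && X g Gp j.+1 ((g ^ j.+1).-1, y)) = (y == yY).
  by rewrite -!MY HY.
have VY' x : (X g Gp j.+1 (x, 0) && X g Gp j.+1 (x, (g ^ j.+1).-1)) = (x == xY).
  by rewrite -!MY VY.
have e1 : g ^ j.+1 = g * g ^ j := expnS g j.
have e2 : g ^ j.+2 = g * g ^ j.+1 := expnS g j.+1.
have hGh := @hbr_G (X g Gp j) Gp (g ^ j) g yY L'0 g0 bxW
  (fun y => ltac:(rewrite -e1; exact: HY' y)).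
have vGh := @vbr_G (X g Gp j) Gp (g ^ j) g xY L'0 g0 bxW
  (fun x => ltac:(rewrite -e1; exact: VY' x)).
have cG : conn Gp := conn_down L'0 bxW (@X00 g Gp j Gp0) cY.
have aG : acyc Gp.
  by apply: (acyc_sub _ aY) => p Gpp; apply: Xmono.
have hY1 := HY' yY; rewrite eqxx in hY1; case/andP: hY1 => hy1 hy2.
have vY1 := VY' xY; rewrite eqxx in vY1; case/andP: vY1 => vy1 vy2.
split; [split|split].
- apply/(conn_tr MZ).
  exact: (@conn_up (X g Gp j.+1) Gp (g ^ j.+1) xY yY L0 bxY hy1 hy2 vy1 vy2 cY cG).
- apply/(acyc_tr MZ).
  apply: (@acyc_up (X g Gp j.+1) Gp (g ^ j.+1) xY yY L0 _ _ aY aG).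
  + by move=> y h1 h2; apply/eqP; rewrite -HY' h1 h2.
  + by move=> x h1 h2; apply/eqP; rewrite -VY' h1 h2.
- apply/nhb1; exists (yY %/ g ^ j * g ^ j.+1 + yY) => y.
  rewrite lZ rZ !MZ e2.
  exact: (@hbr_up (X g Gp j.+1) Gp (g ^ j.+1) g yY (yY %/ g ^ j) L0 g0 bxY HY' hGh y).
- apply/nvb1; exists (xY %/ g ^ j * g ^ j.+1 + xY) => x.
  rewrite bZ tZ !MZ e2.
  exact: (@vbr_up (X g Gp j.+1) Gp (g ^ j.+1) g xY (xY %/ g ^ j) L0 g0 bxY VY' vGh x).
Qed.
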